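(* Suppose $pn\to\infty$ and $q\ln n\to\infty$ as $n\to\infty$, where $q=1-p$. Then for every $\varepsilon>0$ there exists $n_0$ such that for all $n\ge n_0$, $$u_2(n,p)\le(2+\varepsilon)\log_{\frac{1}{1-p}}(np)\quad\text{and}\quad u_2'(n,p)\le(2+\varepsilon)\log_{\frac{1}{1-p}}(np).$$
   Context: $G(n,p)$ is the Erdős–Rényi random graph on $n$ labelled vertices (vertex set $V$), each edge present independently with probability $p=p(n)$; $\mathbb{P}_{n,p}$ is the corresponding probability and $q=1-p$. A diameter graph in $\mathbb{R}^d$ is a graph $(V,E)$ with $V\subset\mathbb{R}^d$ finite and $E=\{\{\mathbf{x},\mathbf{y}\}\subseteq V: |\mathbf{x}-\mathbf{y}|=\operatorname{diam}V\}$, where $\operatorname{diam}V=\max_{\mathbf{x},\mathbf{y}\in V}|\mathbf{x}-\mathbf{y}|$ (Euclidean norm); a graph is a diameter graph in $\mathbb{R}^d$ if it is isomorphic to one. $u_d(n,p)$ is the largest positive integer $k$ such that $\mathbb{P}_{n,p}\big(\exists W\subseteq V,\ |W|=k,\ G[W]$ is a diameter graph in $\mathbb{R}^d$ and $\chi(G[W])=d+1\big)>\frac12$, where $G[W]$ is the induced subgraph; if no such $k$ exists, $u_d(n,p)=0$. $u_d'(n,p)$ is defined identically with the additional requirement that $G[W]$ be connected. *)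

(* Defs.v *)
From Stdlib Require Import Reals ClassicalEpsilon.
From mathcomp Require Import all_boot.


Definition Rsum {T : Type} (s : seq T) (f : T -> R) : R :=
  foldr (fun x a => Rplus (f x) a) R0 s.
Definition Rprod {T : Type} (s : seq T) (f : T -> R) : R :=
  foldr (fun x a => Rmult (f x) a) R1 s.

(* Unordered pairs {i,j} of distinct vertices of V = 'I_n, encoded as i < j. *)
Definition pairT (n : nat) := {x : 'I_n * 'I_n | (x.1 < x.2)%N}.

Definition graphT (n : nat) := {ffun pairT n -> bool}.

Definition adj (n : nat) (g : graphT n) : rel 'I_n := fun i j =>
  match (insub (i, j) : option (pairT n)) with
  | Some e => g e
  | None => match (insub (j, i) : option (pairT n)) with
            | Some e => g e
            | None => false
            end
  end.

Definition weight (n : nat) (p : R) (g : graphT n) : R :=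
  Rprod (enum {: pairT n}) (fun e => if g e then p else Rminus R1 p).

Definition prob (n : nat) (p : R) (A : graphT n -> Prop) : R :=
  Rsum (enum {: graphT n})
    (fun g => if excluded_middle_informative (A g) then weight n p g else R0).

Definition edist (d : nat) (x y : 'I_d -> R) : R :=
  sqrt (Rsum (enum {: 'I_d}) (fun i => pow (Rminus (x i) (y i)) 2)).

(* The induced subgraph E[W] is isomorphic to a diameter graph in R^d:
   an injective placement f of W in R^d, D = diam f(W), and for distinct
   x, y in W:  x ~ y  iff  |f x - f y| = D. *)
Definition is_diameter_graph (d n : nat) (E : rel 'I_n) (W : {set 'I_n}) : Prop :=
  exists f : 'I_n -> ('I_d -> R),
    {in W &, injective f} /\
    exists D : R,
      (forall x y, x \in W -> y \in W -> Rle (edist d (f x) (f y)) D) /\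
      (exists x y, x \in W /\ y \in W /\ edist d (f x) (f y) = D) /\
      (forall x y, x \in W -> y \in W -> x <> y ->
         (E x y <-> edist d (f x) (f y) = D)).

Definition colorable (n : nat) (E : rel 'I_n) (W : {set 'I_n}) (k : nat) : Prop :=
  exists c : 'I_n -> nat,
    (forall x, x \in W -> (c x < k)%N) /\
    (forall x y, x \in W -> y \in W -> E x y -> c x <> c y).

Definition chromatic_number_is (n : nat) (E : rel 'I_n) (W : {set 'I_n}) (k : nat) : Prop :=
  colorable n E W k /\ (forall j, colorable n E W j -> (k <= j)%N).

Definition connected_on (n : nat) (E : rel 'I_n) (W : {set 'I_n}) : Prop :=
  forall x y, x \in W -> y \in W ->
    connect (fun a b => [&& a \in W, b \in W & E a b]) x y.

Definition event (d n k : nat) (conn : bool) (g : graphT n) : Prop :=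
  exists W : {set 'I_n}, #|W| = k /\
    is_diameter_graph d n (adj n g) W /\
    chromatic_number_is n (adj n g) W d.+1 /\
    (conn -> connected_on n (adj n g) W).

Definition good (d n : nat) (p : R) (conn : bool) (k : nat) : bool :=
  if Rlt_dec (Rinv 2) (prob n p (event d n k conn)) then true else false.

(* Largest k (k <= n, since no k-subset exists for k > n) with probability
   > 1/2; 0 if there is none. *)
Definition u_gen (d n : nat) (p : R) (conn : bool) : nat :=
  \max_(k < n.+1 | good d n p conn k) k.

Definition u (d n : nat) (p : R) : nat := u_gen d n p false.
Definition u' (d n : nat) (p : R) : nat := u_gen d n p true.

(* Main.v *)
Require Import Defs.
From Stdlib Require Import Reals Lra Lia Psatz ClassicalEpsilon.
From HB Require Import structures.
From mathcomp Require Import all_boot zify.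

Set Implicit Arguments. Unset Strict Implicit. Unset Printing Implicit Defensive.

HB.instance Definition _ := Monoid.isComLaw.Build R R0 Rplus (fun a b c => esym (Rplus_assoc a b c)) Rplus_comm Rplus_0_l.
HB.instance Definition _ := Monoid.isComLaw.Build R R1 Rmult (fun a b c => esym (Rmult_assoc a b c)) Rmult_comm Rmult_1_l.
HB.instance Definition _ := Monoid.isMulLaw.Build R R0 Rmult Rmult_0_l Rmult_0_r.
HB.instance Definition _ := Monoid.isAddLaw.Build R Rmult Rplus Rmult_plus_distr_r Rmult_plus_distr_l.

Lemma RsumE (T : Type) (s : seq T) f : Rsum s f = \big[Rplus/R0]_(x <- s) f x.
Proof. elim: s => [|x s IH]; by rewrite ?big_nil ?big_cons //= IH. Qed.
Lemma RprodE (T : Type) (s : seq T) f : Rprod s f = \big[Rmult/R1]_(x <- s) f x.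
Proof. elim: s => [|x s IH]; by rewrite ?big_nil ?big_cons //= IH. Qed.

Lemma Rle_big (I : Type) (r : seq I) (P : pred I) (F G : I -> R) :
  (forall i, P i -> Rle (F i) (G i)) ->
  Rle (\big[Rplus/R0]_(i <- r | P i) F i) (\big[Rplus/R0]_(i <- r | P i) G i).
Proof. move=> H; apply: (big_ind2 (fun x y => Rle x y)) => //; [lra | move=> *; lra]. Qed.

Lemma Rge0_big (I : Type) (r : seq I) (P : pred I) (F : I -> R) :
  (forall i, P i -> Rle 0 (F i)) -> Rle 0 (\big[Rplus/R0]_(i <- r | P i) F i).
Proof. move=> H; apply: (big_ind (fun x => Rle 0 x)) => //; [lra | move=> *; lra]. Qed.

Lemma Rprod_ge0 (I : Type) (r : seq I) (P : pred I) (F : I -> R) :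
  (forall i, P i -> Rle 0 (F i)) -> Rle 0 (\big[Rmult/R1]_(i <- r | P i) F i).
Proof. move=> H; apply: (big_ind (fun x => Rle 0 x)) => //; [lra | move=> *; nra]. Qed.

Lemma Rsum_const (I : finType) (A : {pred I}) c :
  \big[Rplus/R0]_(i in A) c = Rmult (INR #|A|) c.
Proof. rewrite big_const; elim: #|A| => [|m IH] /=; first lra. rewrite IH -/(INR m.+1) S_INR; lra. Qed.

Lemma Rprod_const (I : finType) (A : {pred I}) c :
  \big[Rmult/R1]_(i in A) c = pow c #|A|.
Proof. rewrite big_const; elim: #|A| => [|m IH] //=. by rewrite IH. Qed.

Lemma sum_pairT n (F : 'I_n -> 'I_n -> nat) :
  \sum_(e : pairT n) F (val e).1 (val e).2 =
  \sum_(a < n) \sum_(b < n) (if (a < b)%N then F a b else 0%N).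
Proof.
rewrite pair_big /=.
rewrite (bigID (fun x : 'I_n * 'I_n => (x.1 < x.2)%N)) /=.
rewrite [X in (_ + X)%N]big1 ?addn0; last by move=> [a b] /negbTE /= ->.
rewrite (reindex_omap (val : pairT n -> 'I_n * 'I_n) insub); last first.
  by move=> x Px; rewrite insubT.
apply: eq_big => [e|e _]; last by case: e => [[a b] /= ->].
by case: e => [[a b] h] /=; rewrite h insubT /= eqxx.
Qed.

Definition Ew n (W : {set 'I_n}) := [set e : pairT n | ((val e).1 \in W) && ((val e).2 \in W)].

Lemma card_Ew n (W : {set 'I_n}) : (2 * #|Ew W| + #|W| = #|W| * #|W|)%N.
Proof.
have E1 : #|Ew W| = \sum_(e : pairT n) ((val e).1 \in W) && ((val e).2 \in W).
  by rewrite cardE -sum1_size big_enum /= big_mkcond; apply: eq_bigr => e _; rewrite inE; case: ifP.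
have E2 : #|W| = \sum_(a < n) (a \in W).
  by rewrite cardE -sum1_size big_enum /= big_mkcond; apply: eq_bigr => e _; case: ifP.
rewrite E1 (sum_pairT (fun a b => (a \in W) && (b \in W))).
have Hsq : (#|W| * #|W| = \sum_(a < n) \sum_(b < n) ((a \in W) && (b \in W)))%N.
  rewrite {1}E2 big_distrl /=; apply: eq_bigr => a _.
  rewrite E2 big_distrr /=; apply: eq_bigr => b _. by case: (a \in W); case: (b \in W).
rewrite Hsq E2 mul2n -addnn.
have Hsym : \sum_(a < n) \sum_(b < n) (if (a < b)%N then ((a \in W) && (b \in W) : nat) else 0%N)
   = \sum_(a < n) \sum_(b < n) (if (b < a)%N then ((a \in W) && (b \in W) : nat) else 0%N).
  rewrite exchange_big /=; apply: eq_bigr => a _; apply: eq_bigr => b _.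
  by rewrite andbC.
rewrite {2}Hsym -big_split -big_split /=. apply: eq_bigr => a _.
rewrite -big_split /= (bigD1 a) //= [in RHS](bigD1 a) //= ltnn andbb.
rewrite (eq_bigr (fun b => ((a \in W) && (b \in W) : nat))); first by case: (a \in W) => /=; lia.
move=> b hb.
case: ltngtP => h; try lia.
by move: hb; rewrite (val_inj h) eqxx.
Qed.

Definition midprop n (E : rel 'I_n) (W : {set 'I_n}) : Prop :=
 forall v a b c, v \in W -> a \in W -> b \in W -> c \in W -> a <> b -> b <> c -> a <> c ->
   E v a -> E v b -> E v c ->
   exists x, (x = a \/ x = b \/ x = c) /\ forall w, w \in W -> E x w -> w = v.


Section Graph.
Variables (n : nat) (E : rel 'I_n).
Hypothesis Esym : forall x y, E x y = E y x.
Hypothesis Eirr : forall x, E x x = false.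

Definition deg (W : {set 'I_n}) v := \sum_(w in W) (E v w : nat).
Definition Ssum (W : {set 'I_n}) := \sum_(v in W) deg W v.

Lemma deg_remove (W : {set 'I_n}) (v u : 'I_n) : v \in W -> deg W u = (E u v + deg (W :\ v) u)%N.
Proof. by move=> vW; rewrite /deg (big_setD1 _ vW). Qed.

Lemma S_remove (W : {set 'I_n}) (v : 'I_n) : v \in W -> Ssum W = (Ssum (W :\ v) + 2 * deg W v)%N.
Proof.
move=> vW; rewrite {1}/Ssum (big_setD1 _ vW) /=.
rewrite (eq_bigr (fun u => E u v + deg (W :\ v) u)%N); last by move=> u _; apply: deg_remove.
rewrite big_split /=.
have -> : \sum_(i in W :\ v) (E i v : nat) = deg W v.
  rewrite /deg (big_setD1 _ vW) /= Eirr add0n; apply: eq_bigr => u _; by rewrite Esym.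
have -> : \sum_(i in W :\ v) deg (W :\ v) i = Ssum (W :\ v) by [].
move: (Ssum _) (deg W v) => a b; lia.
Qed.

Lemma deg_card (W : {set 'I_n}) (v : 'I_n) : deg W v = #|[set w in W | E v w]|.
Proof.
rewrite -sum1_card /deg big_mkcond [in RHS]big_mkcond /=; apply: eq_bigr => w _.
by rewrite inE; case: (w \in W); case: (E v w).
Qed.

Variable W0 : {set 'I_n}.
Hypothesis Hmid : midprop E W0.

Lemma deg_le2 (W : {set 'I_n}) (v : 'I_n) : W \subset W0 -> v \in W -> (forall u, u \in W -> 2 <= deg W u)%N -> (deg W v <= 2)%N.
Proof.
move=> sub vW Hall; rewrite leqNgt; apply/negP => H3.
set N := [set w in W | E v w].
have cN : (3 <= #|N|)%N by rewrite -deg_card.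
have /card_gt0P [a aN] : (0 < #|N|)%N by lia.
have cN1 : (2 <= #|N :\ a|)%N by move: cN; rewrite (cardsD1 a N) aN; lia.
have /card_gt0P [b bN] : (0 < #|N :\ a|)%N by lia.
have cN2 : (1 <= #|N :\ a :\ b|)%N by move: cN1; rewrite (cardsD1 b (N :\ a)) bN; lia.
have /card_gt0P [c cN0] : (0 < #|N :\ a :\ b|)%N by lia.
move: bN cN0; rewrite !in_setD1 => /andP [ba bN] /andP [cb /andP [ca cN']].
move: aN bN cN'; rewrite !inE => /andP [aW Ea] /andP [bW Eb] /andP [cW Ec].
have sW := subsetP sub.
have ab : a <> b by move=> h; move: ba; rewrite h eqxx.
have bc : b <> c by move=> h; move: cb; rewrite h eqxx.
have ac : a <> c by move=> h; move: ca; rewrite h eqxx.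
have [x [hx Hx]] := Hmid (sW _ vW) (sW _ aW) (sW _ bW) (sW _ cW)
  ab bc ac Ea Eb Ec.
have xW : x \in W by case: hx => [->|[->|->]].
have : (deg W x <= 1)%N.
  rewrite /deg (big_setD1 _ vW) /=.
  rewrite big1 ?addn0; first by case: (E x v).
  move=> w; rewrite in_setD1 => /andP [wv wW].
  case Exw: (E x w) => //.
  by move: wv; rewrite (Hx w (sW _ wW) Exw) eqxx.
have := Hall x xW. lia.
Qed.

Lemma graph_bound m (W : {set 'I_n}) : (#|W| <= m)%N -> W \subset W0 -> (Ssum W <= 2 * #|W|)%N.
Proof.
elim: m W => [|m IH] W Hm sub.
  have -> : W = set0 by apply: cards0_eq; lia.
  by rewrite /Ssum big_set0.
case: (pickP [pred v in W | (deg W v <= 1)%N]) => [v /andP [vW dv]|Hno].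
  rewrite (S_remove vW) (cardsD1 v W) vW.
  have : (Ssum (W :\ v) <= 2 * #|W :\ v|)%N.
    apply: IH; first by move: Hm; rewrite (cardsD1 v W) vW; lia.
    by apply: subset_trans sub; apply: subsetDl.
  change (nat_of_bool true) with 1%N; move=> h; rewrite mulnDr addnC; apply: leq_add h; by rewrite leq_mul2l dv orbT.
have Hall : forall u, u \in W -> (2 <= deg W u)%N.
  by move=> u uW; move: (Hno u) => /= /negbT; rewrite uW /= -ltnNge.
rewrite /Ssum -sum1_card big_distrr /=; apply: leq_sum => v vW.
rewrite muln1; exact: deg_le2.
Qed.

End Graph.

Local Open Scope R_scope.

Definition wt (p : R) (b : bool) : R := if b then p else 1 - p.

Lemma weightE n p g : weight n p g = \big[Rmult/R1]_(e : pairT n) wt p (g e).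
Proof. by rewrite /weight RprodE big_enum. Qed.

Lemma probE n p A : prob n p A =
  \big[Rplus/R0]_(g : graphT n) (if excluded_middle_informative (A g) then weight n p g else 0).
Proof. by rewrite /prob RsumE big_enum. Qed.

Lemma expect n p (U : {set pairT n}) t :
  \big[Rplus/R0]_(g : graphT n) (weight n p g * t ^ #|[set e in U | g e]|) = (p*t + (1-p)) ^ #|U|.
Proof.
have H1 : forall g : graphT n, weight n p g * t ^ #|[set e in U | g e]| =
   \big[Rmult/R1]_(e : pairT n) (wt p (g e) * (if (e \in U) && g e then t else 1)).
  move=> g; rewrite weightE -Rprod_const [in X in _ * X]big_mkcond /=.
  rewrite -big_split /=.
  by apply: eq_bigr => e _; rewrite inE.
rewrite (eq_bigr _ (fun g _ => H1 g)).
rewrite -(bigA_distr_bigA (fun e b => wt p b * (if (e \in U) && b then t else 1))) /=.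
rewrite -Rprod_const [in RHS]big_mkcond /=; apply: eq_bigr => e _.
rewrite big_bool /wt /=; case: (e \in U) => /=; lra.
Qed.

Definition ecount n (g : graphT n) (W : {set 'I_n}) := #|[set e in Ew W | g e]|.

Lemma pow_le_dec (t : R) (m k : nat) : 0 < t <= 1 -> (m <= k)%N -> t ^ k <= t ^ m.
Proof.
move=> Ht /subnK <-; rewrite pow_add.
have : t ^ (k - m) <= 1 by rewrite -(pow1 (k - m)); apply: pow_incr; lra.
have : 0 <= t ^ m by apply: pow_le; lra.
have : 0 <= t ^ (k - m) by apply: pow_le; lra.
nra.
Qed.

Lemma weight_ge0 n p g : 0 <= p <= 1 -> 0 <= weight n p g.
Proof. move=> Hp; rewrite weightE; apply: Rprod_ge0 => e _; rewrite /wt; case: (g e); lra. Qed.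

Lemma prob_markov n p k N (A : graphT n -> Prop) t :
  0 <= p <= 1 -> 0 < t <= 1 ->
  (forall W : {set 'I_n}, #|W| = k -> #|Ew W| = N) ->
  (forall g, A g -> exists W : {set 'I_n}, #|W| = k /\ (ecount g W <= k)%N) ->
  prob n p A <= INR 'C(n, k) * ((p * t + (1 - p)) ^ N / t ^ k).
Proof.
move=> Hp Ht HN HA.
have tk : 0 < t ^ k by apply: pow_lt; lra.
pose S g := \big[Rplus/R0]_(W in [set W : {set 'I_n} | #|W| == k]) (t ^ ecount g W / t ^ k).
apply: (Rle_trans _ (\big[Rplus/R0]_(g : graphT n) (weight n p g * S g))).
  rewrite probE; apply: Rle_big => g _.
  have Sge0 : 0 <= S g.
    apply: Rge0_big => W _; apply: Rmult_le_pos; [apply: pow_le; lra | ].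
    by apply: Rlt_le; apply: Rinv_0_lt_compat.
  have wg := weight_ge0 g Hp.
  destruct (excluded_middle_informative (A g)) as [Ag|nAg]; last by apply: Rmult_le_pos.
  have [W [HW Hc]] := HA g Ag.
  have : 1 <= S g.
    rewrite /S (bigD1 W) /=; last by rewrite inE HW eqxx.
    have : t ^ k <= t ^ ecount g W by apply: pow_le_dec.
    have : 0 <= \big[Rplus/R0]_(i in [set W0 : {set 'I_n} | #|W0| == k] | i != W) (t ^ ecount g i / t ^ k).
      apply: Rge0_big => W' _; apply: Rmult_le_pos; [apply: pow_le; lra | ].
      by apply: Rlt_le; apply: Rinv_0_lt_compat.
    move=> H1 H2.
    have : 1 <= t ^ ecount g W / t ^ k.
      apply (Rmult_le_reg_r (t ^ k)) => //. rewrite /Rdiv Rmult_assoc Rinv_l; lra.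
    move=> H3; apply: (Rle_trans _ _ _ H3).
    rewrite -[X in X <= _]Rplus_0_r; apply: Rplus_le_compat_l; exact: H1.
  move=> HS /=; nra.
rewrite (eq_bigr (fun g => \big[Rplus/R0]_(W in [set W : {set 'I_n} | #|W| == k]) (weight n p g * t ^ ecount g W / t ^ k))); last first.
  move=> g _; rewrite /S big_distrr /=; apply: eq_bigr => W _; rewrite /Rdiv Rmult_assoc //.
rewrite exchange_big /=.
rewrite (eq_bigr (fun W => (p * t + (1 - p)) ^ N / t ^ k)); last first.
  move=> W HW'; have HW : #|W| = k by move: HW'; rewrite inE => /eqP.
  rewrite -big_distrl /= /ecount expect HN //.
rewrite Rsum_const card_draws card_ord; apply: Rle_refl.
Qed.

Lemma core (a0 a1 b0 b1 c0 c1 w0 w1 al be ga D2 : R) :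
  a0^2 + a1^2 = D2 -> b0^2 + b1^2 = D2 -> c0^2 + c1^2 = D2 ->
  a0*c0 + a1*c1 < D2 -> 0 < w0^2 + w1^2 ->
  (w0-a0)^2 + (w1-a1)^2 <= D2 -> (w0-c0)^2 + (w1-c1)^2 <= D2 ->
  (w0-b0)^2 + (w1-b1)^2 = D2 ->
  al*a0 + be*b0 + ga*c0 = 0 -> al*a1 + be*b1 + ga*c1 = 0 ->
  0 < al -> 0 < ga -> be < 0 -> False.
Proof.
move=> Ha Hb Hc Hac Hw Hwa Hwc Hwb E0 E1 Hal Hga Hbe.
set s := - be.
have Hs : 0 < s by rewrite /s; lra.
have sb0 : s * b0 = al*a0 + ga*c0 by rewrite /s; lra.
have sb1 : s * b1 = al*a1 + ga*c1 by rewrite /s; lra.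
have Ia : w0^2 + w1^2 <= 2*(w0*a0 + w1*a1) by nra.
have Ic : w0^2 + w1^2 <= 2*(w0*c0 + w1*c1) by nra.
have Ib : w0^2 + w1^2 = 2*(w0*b0 + w1*b1) by nra.
have H1 : s * (w0^2 + w1^2) = 2*al*(w0*a0+w1*a1) + 2*ga*(w0*c0+w1*c1).
  rewrite Ib; have -> : s * (2 * (w0 * b0 + w1 * b1)) = 2*(w0*(s*b0) + w1*(s*b1)) by ring.
  rewrite sb0 sb1; ring.
have H2 : (al + ga) * (w0^2 + w1^2) <= s * (w0^2+w1^2) by rewrite H1; nra.
have H3 : al + ga <= s.
  apply: (Rmult_le_reg_r (w0^2+w1^2)) => //; lra.
have H4 : s^2 * D2 = al^2 * D2 + ga^2 * D2 + 2*al*ga*(a0*c0+a1*c1).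
  rewrite -{1}Hb; have -> : s^2 * (b0^2+b1^2) = (s*b0)^2 + (s*b1)^2 by ring.
  rewrite sb0 sb1 -{1}Ha -{1}Hc; ring.
have HD : 0 < D2.
  have L : (w0*b0+w1*b1)^2 + (w0*b1-w1*b0)^2 = (w0^2+w1^2)*(b0^2+b1^2) by ring.
  rewrite Hb in L.
  have Hu : 0 < w0*b0+w1*b1 by lra.
  destruct (Rlt_le_dec 0 D2) as [h|h]; first exact h.
  have : (w0^2+w1^2)*D2 <= 0 by nra.
  have : 0 < (w0*b0+w1*b1)^2 by apply: pow_lt.
  have : 0 <= (w0*b1-w1*b0)^2 by apply: pow2_ge_0.
  lra.
have H5 : al^2 * D2 + ga^2 * D2 + 2*al*ga*(a0*c0+a1*c1) < (al+ga)^2 * D2.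
  have : 0 < al * ga by nra. nra.
have H6 : (al+ga)^2 * D2 <= s^2 * D2.
  apply: Rmult_le_compat_r; first lra. nra.
lra.
Qed.

Section Geom.
Variables (n : nat) (E : rel 'I_n) (W : {set 'I_n}) (X Y : 'I_n -> R) (D2 : R).
Hypothesis Eirr : forall x, E x x = false.
Hypothesis Hle : forall x y, x \in W -> y \in W -> (X x - X y)^2 + (Y x - Y y)^2 <= D2.
Hypothesis Hpos : forall x y, x \in W -> y \in W -> x <> y -> 0 < (X x - X y)^2 + (Y x - Y y)^2.
Hypothesis Heq : forall x y, x \in W -> y \in W -> E x y -> (X x - X y)^2 + (Y x - Y y)^2 = D2.

Lemma mid_point v p q r w al be ga :
  v \in W -> p \in W -> q \in W -> r \in W -> w \in W -> p <> r ->
  E v p -> E v q -> E v r -> E q w ->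
  al * (X p - X v) + be * (X q - X v) + ga * (X r - X v) = 0 ->
  al * (Y p - Y v) + be * (Y q - Y v) + ga * (Y r - Y v) = 0 ->
  (0 < al /\ 0 < ga /\ be < 0) \/ (al < 0 /\ ga < 0 /\ 0 < be) -> w = v.
Proof.
move=> vW pW qW rW wW pr Ep Eq Er Ew E0 E1 Hs.
case: (eqVneq w v) => [//|/eqP wv]; exfalso.
have Hp := Heq vW pW Ep. have Hq := Heq vW qW Eq. have Hr := Heq vW rW Er.
have Hpr := Hpos pW rW pr. have Hpr' := Hle pW rW.
have Hw := Hpos wW vW wv.

have Hwp := Hle wW pW. have Hwr := Hle wW rW. have Hwq := Heq qW wW Ew.
have Hpr2 : (X p - X v)*(X r - X v) + (Y p - Y v)*(Y r - Y v) < D2 by nra.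
case: Hs => [[h1 [h2 h3]]|[h1 [h2 h3]]].
- apply: (core (a0 := X p - X v) (a1 := Y p - Y v) (b0 := X q - X v) (b1 := Y q - Y v)
     (c0 := X r - X v) (c1 := Y r - Y v) (w0 := X w - X v) (w1 := Y w - Y v) (al := al) (be := be) (ga := ga) (D2 := D2)); try nra.
- apply: (core (a0 := X p - X v) (a1 := Y p - Y v) (b0 := X q - X v) (b1 := Y q - Y v)
     (c0 := X r - X v) (c1 := Y r - Y v) (w0 := X w - X v) (w1 := Y w - Y v) (al := - al) (be := - be) (ga := - ga) (D2 := D2)); try nra.
Qed.

Lemma mid_geom : midprop E W.
Proof.
move=> v a b c vW aW bW cW ab bc ac Ea Eb Ec.
set A0 := X a - X v; set A1 := Y a - Y v; set B0 := X b - X v; set B1 := Y b - Y v.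
set C0 := X c - X v; set C1 := Y c - Y v.
have Ha : A0^2 + A1^2 = D2 by rewrite -(Heq vW aW Ea) /A0 /A1; ring.
have Hb : B0^2 + B1^2 = D2 by rewrite -(Heq vW bW Eb) /B0 /B1; ring.
have Hc : C0^2 + C1^2 = D2 by rewrite -(Heq vW cW Ec) /C0 /C1; ring.
have dAB : (X a - X b)^2 + (Y a - Y b)^2 = (A0 - B0)^2 + (A1 - B1)^2 by rewrite /A0 /B0 /A1 /B1; ring.
have dAC : (X a - X c)^2 + (Y a - Y c)^2 = (A0 - C0)^2 + (A1 - C1)^2 by rewrite /A0 /C0 /A1 /C1; ring.
have dBC : (X b - X c)^2 + (Y b - Y c)^2 = (B0 - C0)^2 + (B1 - C1)^2 by rewrite /C0 /B0 /C1 /B1; ring.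
have pAB := Hpos aW bW ab. have pAC := Hpos aW cW ac. have pBC := Hpos bW cW bc.
have lAB := Hle aW bW. have lAC := Hle aW cW. have lBC := Hle bW cW.
rewrite dAB in pAB lAB; rewrite dAC in pAC lAC; rewrite dBC in pBC lBC.
have HD : 0 < D2 by nra.
have xAB : 0 < A0*B0 + A1*B1 < D2 by split; nra.
have xAC : 0 < A0*C0 + A1*C1 < D2 by split; nra.
have xBC : 0 < B0*C0 + B1*C1 < D2 by split; nra.
set al := B0*C1 - B1*C0; set be := C0*A1 - C1*A0; set ga := A0*B1 - A1*B0.
have I0 : al * A0 + be * B0 + ga * C0 = 0 by rewrite /al /be /ga; ring.
have I1 : al * A1 + be * B1 + ga * C1 = 0 by rewrite /al /be /ga; ring.
have nz : forall (P0 P1 Q0 Q1 : R), P0^2 + P1^2 = D2 -> Q0^2 + Q1^2 = D2 ->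
    0 < P0*Q0 + P1*Q1 < D2 -> 0 < (P0*Q1 - P1*Q0)^2.
  move=> P0 P1 Q0 Q1 HP HQ HPQ.
  have L : (P0*Q0+P1*Q1)^2 + (P0*Q1-P1*Q0)^2 = (P0^2+P1^2)*(Q0^2+Q1^2) by ring.
  rewrite HP HQ in L. nra.
have nal : 0 < al^2 by apply: nz.
have nbe : 0 < be^2.
  have h := nz _ _ _ _ Ha Hc xAC.
  have -> : be^2 = (A0*C1 - A1*C0)^2 by rewrite /be; ring.
  exact h.

have nga : 0 < ga^2 by apply: nz.
have dotA : al * D2 + be * (A0*B0 + A1*B1) + ga * (A0*C0 + A1*C1) = 0.
  rewrite -Ha; have -> : al * (A0^2 + A1^2) + be * (A0*B0 + A1*B1) + ga * (A0*C0 + A1*C1)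
     = A0 * (al * A0 + be * B0 + ga * C0) + A1 * (al * A1 + be * B1 + ga * C1) by ring.
  by rewrite I0 I1; ring.
have sgn : forall x : R, 0 < x^2 -> 0 < x \/ x < 0.
  move=> x hx; case: (Rtotal_order x 0) => [h|[h|h]]; [by right|subst x; nra|by left].
have [sa|sa] := sgn _ nal; have [sb|sb] := sgn _ nbe; have [sg|sg] := sgn _ nga.
- exfalso.
  have := Rmult_lt_0_compat _ _ sa HD.
  have := Rmult_lt_0_compat _ _ sb (proj1 xAB).
  have := Rmult_lt_0_compat _ _ sg (proj1 xAC). lra.
- exists c; split; first by right; right.
  move=> w wW Ew; apply: (mid_point (p := a) (q := c) (r := b) (al := al) (be := ga) (ga := be));
  try done; try (rewrite -/A0 -/B0 -/C0; lra); try (rewrite -/A1 -/B1 -/C1; lra);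
  first [left; repeat split; lra | right; repeat split; lra].


- exists b; split; first by right; left.
  move=> w wW Ew; apply: (mid_point (p := a) (q := b) (r := c) (al := al) (be := be) (ga := ga));
  try done; try (rewrite -/A0 -/B0 -/C0; lra); try (rewrite -/A1 -/B1 -/C1; lra);
  first [left; repeat split; lra | right; repeat split; lra].
- exists a; split; first by left.
  move=> w wW Ew; apply: (mid_point (p := b) (q := a) (r := c) (al := be) (be := al) (ga := ga));
  try done; try (rewrite -/A0 -/B0 -/C0; lra); try (rewrite -/A1 -/B1 -/C1; lra);
  first [left; repeat split; lra | right; repeat split; lra].
- exists a; split; first by left.
  move=> w wW Ew; apply: (mid_point (p := b) (q := a) (r := c) (al := be) (be := al) (ga := ga));
  try done; try (rewrite -/A0 -/B0 -/C0; lra); try (rewrite -/A1 -/B1 -/C1; lra);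
  first [left; repeat split; lra | right; repeat split; lra].
- exists b; split; first by right; left.
  move=> w wW Ew; apply: (mid_point (p := a) (q := b) (r := c) (al := al) (be := be) (ga := ga));
  try done; try (rewrite -/A0 -/B0 -/C0; lra); try (rewrite -/A1 -/B1 -/C1; lra);
  first [left; repeat split; lra | right; repeat split; lra].
- exists c; split; first by right; right.
  move=> w wW Ew; apply: (mid_point (p := a) (q := c) (r := b) (al := al) (be := ga) (ga := be));
  try done; try (rewrite -/A0 -/B0 -/C0; lra); try (rewrite -/A1 -/B1 -/C1; lra);
  first [left; repeat split; lra | right; repeat split; lra].
- exfalso.
  have := Rmult_lt_0_compat _ _ (Ropp_0_gt_lt_contravar _ sa) HD.
  have := Rmult_lt_0_compat _ _ (Ropp_0_gt_lt_contravar _ sb) (proj1 xAB).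
  have := Rmult_lt_0_compat _ _ (Ropp_0_gt_lt_contravar _ sg) (proj1 xAC). lra.
Qed.


End Geom.


Lemma adj_irr n g (i : 'I_n) : adj n g i i = false.
Proof. by rewrite /adj !insubF //= ltnn. Qed.

Lemma adj_pair n g (e : pairT n) : adj n g (val e).1 (val e).2 = g e.
Proof.
rewrite /adj; case: insubP => [e' _ Ev|Hn]; first by congr (g _); apply: val_inj; rewrite Ev; case: (val e).
by case: e Hn => [[i j] h] /=; rewrite h.
Qed.

Lemma adj_lt n g (i j : 'I_n) : (i < j)%N -> exists e : pairT n, val e = (i, j) /\ adj n g i j = g e.
Proof.
move=> h; exists (exist _ (i, j) h); split => //.
by rewrite -(adj_pair g (exist _ (i, j) h)).
Qed.

Lemma adj_gt n g (i j : 'I_n) : (j < i)%N -> adj n g i j = adj n g j i.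
Proof.
move=> h; rewrite {1}/adj; case: insubP => [e' He' _|_]; first by move: He' => /=; rewrite ltnNge ltnW.
case: insubP => [e'' _ Ev|Hn]; last by move: Hn => /=; rewrite h.
have -> : e'' = exist _ (j, i) h by apply: val_inj; rewrite Ev.
by rewrite -(adj_pair g (exist _ (j, i) h)).
Qed.

Lemma adj_sym n g (i j : 'I_n) : adj n g i j = adj n g j i.
Proof.
case: (ltngtP i j) => h.
- by rewrite (adj_gt g h).
- by rewrite (adj_gt g h).
- by rewrite (val_inj h).
Qed.

Lemma sym_split n (F : 'I_n -> 'I_n -> nat) : (forall a b, F a b = F b a) ->
  \sum_(a < n) \sum_(b < n) F a b =
  (2 * \sum_(a < n) \sum_(b < n) (if (a < b)%N then F a b else 0%N) + \sum_(a < n) F a a)%N.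
Proof.
move=> Fs.
rewrite mul2n -addnn.
have Hsym : \sum_(a < n) \sum_(b < n) (if (a < b)%N then F a b else 0%N)
   = \sum_(a < n) \sum_(b < n) (if (b < a)%N then F a b else 0%N).
  rewrite exchange_big /=; apply: eq_bigr => a _; apply: eq_bigr => b _.
  by rewrite Fs.
rewrite {2}Hsym -big_split -big_split /=; apply: eq_bigr => a _.
rewrite -big_split /= [in RHS](bigD1 a) //= [in LHS](bigD1 a) //= ltnn.
rewrite [in RHS](eq_bigr (fun b => F a b)); first lia.
move=> b hb.
case: ltngtP => h; try lia.
by move: hb; rewrite (val_inj h) eqxx.
Qed.

Lemma handshake n g (W : {set 'I_n}) : Ssum (adj n g) W = (2 * ecount g W)%N.
Proof.
have E1 : ecount g W = \sum_(e : pairT n) ((((val e).1 \in W) && ((val e).2 \in W) && adj n g (val e).1 (val e).2) : nat).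
  rewrite /ecount cardE -sum1_size big_enum /= big_mkcond; apply: eq_bigr => e _.
  by rewrite !inE adj_pair; case: ifP.
rewrite E1 (sum_pairT (fun a b => ((a \in W) && (b \in W) && adj n g a b) : nat)).
have -> : Ssum (adj n g) W = \sum_(a < n) \sum_(b < n) ((a \in W) && (b \in W) && adj n g a b : nat).
  rewrite /Ssum big_mkcond /=; apply: eq_bigr => a _.
  rewrite /deg big_mkcond /=; case: (a \in W) => /=; last by rewrite big1.
  by apply: eq_bigr => b _; case: (b \in W).
rewrite sym_split; last by move=> a b; rewrite adj_sym; case: (a \in W); case: (b \in W).
rewrite [X in (_ + X)%N]big1 ?addn0 // => a _; by rewrite adj_irr andbF.
Qed.

From Stdlib Require Import FunctionalExtensionality.

Lemma edist2 (x y : 'I_2 -> R) : edist 2 x y =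
  sqrt ((x ord0 - y ord0)^2 + (x (lift ord0 ord0) - y (lift ord0 ord0))^2).
Proof.
rewrite /edist RsumE big_enum /= big_ord_recl big_ord_recl big_ord0 /=.
by rewrite Rplus_0_r.
Qed.

Lemma ord2_cases (i : 'I_2) : i = ord0 \/ i = lift ord0 ord0.
Proof. case: i => [[|[|//]]] h; [left|right]; exact: val_inj. Qed.

Lemma diam_ecount n g (W : {set 'I_n}) : is_diameter_graph 2 n (adj n g) W -> (ecount g W <= #|W|)%N.
Proof.
case=> f [inj [D [Hle [_ Hiff]]]].
pose X x := f x ord0. pose Y x := f x (lift ord0 ord0).
have dE : forall x y, edist 2 (f x) (f y) = sqrt ((X x - X y)^2 + (Y x - Y y)^2) by move=> x y; exact: edist2.
have sq : forall x y, (X x - X y)^2 + (Y x - Y y)^2 = (edist 2 (f x) (f y))^2.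
  move=> x y; rewrite dE pow2_sqrt //; have := pow2_ge_0 (X x - X y); have := pow2_ge_0 (Y x - Y y); lra.
have Hle2 : forall x y, x \in W -> y \in W -> (X x - X y)^2 + (Y x - Y y)^2 <= D^2.
  move=> x y xW yW; rewrite sq; apply: pow_incr; split; last exact: Hle.
  rewrite dE; exact: sqrt_pos.
have Hpos : forall x y, x \in W -> y \in W -> x <> y -> 0 < (X x - X y)^2 + (Y x - Y y)^2.
  move=> x y xW yW xy.
  have h0 := pow2_ge_0 (X x - X y); have h1 := pow2_ge_0 (Y x - Y y).
  case: (Rle_lt_or_eq_dec 0 _ (Rplus_le_le_0_compat _ _ h0 h1)) => // h.
  exfalso; apply: xy; apply: inj => //.
  have ex : X x = X y by nra.
  have ey : Y x = Y y by nra.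
  apply: functional_extensionality => i; case: (ord2_cases i) => ->; [exact: ex|exact: ey].
have Heq : forall x y, x \in W -> y \in W -> adj n g x y -> (X x - X y)^2 + (Y x - Y y)^2 = D^2.
  move=> x y xW yW E; rewrite sq; congr (_ ^ 2); apply/(Hiff x y xW yW) => //.
  by move=> h; move: E; rewrite h adj_irr.
have Hm : midprop (adj n g) W := mid_geom Hle2 Hpos Heq.
have := graph_bound (adj_sym g) (adj_irr g) Hm (leqnn #|W|) (subxx W).
rewrite handshake; lia.
Qed.

Lemma INR_mul (a b : nat) : INR (a * b)%N = INR a * INR b.
Proof. by rewrite -multE mult_INR. Qed.

Lemma INR_exp (a k : nat) : INR (a ^ k)%N = INR a ^ k.
Proof. elim: k => [|k IH] //; by rewrite expnS INR_mul IH. Qed.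

Lemma INR_leq (a b : nat) : (a <= b)%N -> INR a <= INR b.
Proof. by move/leP; apply: le_INR. Qed.

Lemma pow_exp_le (y : R) (m : nat) : 0 <= y -> (1 + y) ^ m <= exp (y * INR m).
Proof.
move=> hy; elim: m => [|m IH]; first by rewrite /= Rmult_0_r exp_0; lra.
rewrite -/(INR m.+1) S_INR /= Rmult_plus_distr_l Rmult_1_r exp_plus Rmult_comm.
apply: Rmult_le_compat => //; [apply: pow_le; lra | lra | exact: exp_ineq1_le].
Qed.

Lemma kk_fact (k : nat) : INR k ^ k <= exp (INR k) * INR (k`!).
Proof.
elim: k => [|k IH]; first by rewrite /= exp_0; lra.
case: k IH => [|k] IH.
  rewrite /=. have := exp_ineq1_le 1; lra.
set K := INR k.+1.
have HK : 0 < K by apply: lt_0_INR; apply/leP.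
rewrite -/(INR k.+2) S_INR -/K factS INR_mul -/(INR k.+2) S_INR -/K.
have E1 : (K + 1) ^ k.+2 = (K + 1) * (K ^ k.+1 * (1 + / K) ^ k.+1).
  rewrite -Rpow_mult_distr. have -> : K * (1 + / K) = K + 1 by field; lra. by [].
rewrite E1.
have E2 : (1 + / K) ^ k.+1 <= exp 1.
  have := pow_exp_le k.+1 (Rlt_le _ _ (Rinv_0_lt_compat _ HK)).
  rewrite -/K Rinv_l; lra.
have P1 : 0 <= K ^ k.+1 by apply: pow_le; lra.
have P2 : 0 <= (1 + / K) ^ k.+1 by apply: pow_le; have := Rinv_0_lt_compat _ HK; lra.
have P3 : 0 < exp 1 := exp_pos 1.
have E3 : K ^ k.+1 * (1 + / K) ^ k.+1 <= exp K * INR (k.+1)`! * exp 1.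
  apply: Rmult_le_compat => //.
rewrite exp_plus.
have : 0 <= K + 1 by lra.
nra.
Qed.

Lemma binom_le n k : INR 'C(n, k) * INR (k`!) <= INR n ^ k.
Proof.
rewrite -INR_mul bin_ffact -INR_exp; apply: INR_leq.
rewrite ffact_prod; apply: (leq_trans (leq_prod (E2 := fun _ => n) _)); first by move=> i _; exact: leq_subr.
by rewrite prod_nat_const card_ord.
Qed.

Lemma Nk_card n (W : {set 'I_n}) k N : #|W| = k -> (2 * N + k = k * k)%N -> #|Ew W| = N.
Proof. move=> HW HN; have := card_Ew W; rewrite HW; lia. Qed.

Lemma event_prob n p k b t N : 0 <= p <= 1 -> 0 < t <= 1 -> (2 * N + k = k * k)%N ->
  prob n p (event 2 n k b) <= INR 'C(n, k) * ((p * t + (1 - p)) ^ N / t ^ k).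
Proof.
move=> Hp Ht HN; apply: prob_markov => //.
  by move=> W HW; apply: Nk_card HN.
move=> g [W [HW [Hd _]]]; exists W; split => //; rewrite -HW; exact: diam_ecount.
Qed.

Lemma ln_le_mono x y : 0 < x -> x <= y -> ln x <= ln y.
Proof. move=> hx hxy; case: (Rle_lt_or_eq_dec _ _ hxy) => h; [apply: Rlt_le; exact: ln_increasing | rewrite h; lra]. Qed.

Lemma ln_le_sub1 x : 0 < x -> ln x <= x - 1.
Proof. move=> hx; have := exp_ineq1_le (ln x); rewrite exp_ln //; lra. Qed.

Lemma key_bound n k p eps b :
  0 < eps -> 0 < p -> p < 1 -> 0 < INR n * p ->
  0 < ln (INR n * p) -> 2 <= (1 - p) * ln (INR n * p) ->
  4 + 3 * ln (ln (INR n * p)) <= eps * ln (INR n * p) ->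
  (2 + eps) * (ln (INR n * p) / ln (1 / (1 - p))) < INR k ->
  prob n p (event 2 n k b) <= / 2.
Proof.
move=> he hp hp1 hnp hL hqL hLL hk.
set q := 1 - p in hqL hk *. set L := ln (INR n * p) in hL hqL hLL hk.
have hq : 0 < q < 1 by rewrite /q; lra.
have hn : 0 < INR n by nra.
have hl : 0 < ln (1 / q).
  rewrite -ln_1; apply: ln_increasing; first lra.
  apply: (Rmult_lt_reg_r q); first lra.
  have -> : 1 / q * q = 1 by field; lra. lra.
have hl2 : ln (1 / q) <= p / q.
  apply: Rle_trans (ln_le_sub1 _) _; first by apply: Rdiv_lt_0_compat; lra.
  apply: Req_le; rewrite /q; field; lra.
set K := INR k.
have hK : (2 + eps) * L < K * ln (1 / q).
  have := hk; rewrite -/K => h.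
  have -> : (2 + eps) * L = ((2 + eps) * (L / ln (1 / q))) * ln (1 / q) by field; lra.
  apply: Rmult_lt_compat_r => //.
have hKp : 4 < K * p.
  have h1 : K * p = q * (K * (p / q)) by field; lra.
  have h2 : K * ln (1 / q) <= K * (p / q).
    apply: Rmult_le_compat_l => //. have : 0 < K * ln (1/q) by nra. nra.
  have h3 : q * ((2 + eps) * L) < q * (K * (p / q)) by apply: Rmult_lt_compat_l; lra.
  have h4 : 0 <= eps * (q * L) by nra.
  nra.
have hK4 : 4 < K by nra.
have k5 : (4 < k)%N by apply/ltP; apply: INR_lt; rewrite -/K; simpl; lra.
pose N := 'C(k, 2).
have HN : (2 * N + k = k * k)%N.
  rewrite /N; elim: (k) => [|m IH] //.
  rewrite binS bin1; nia.
have HNR : INR N = K * (K - 1) / 2.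
  have := f_equal INR HN; rewrite plus_INR INR_mul INR_mul -/K /=; lra.
set t := 2 * q / ((K - 1) * p).
have ht : 0 < t <= 1.
  rewrite /t; split; first by apply: Rdiv_lt_0_compat; nra.
  apply: (Rmult_le_reg_r ((K - 1) * p)); first nra.
  rewrite /Rdiv Rmult_assoc Rinv_l; nra.
apply: Rle_trans (@event_prob n p k b t N (conj (Rlt_le _ _ hp) (Rlt_le _ _ hp1)) ht HN) _.
rewrite -/q.
have e1 : p * t + q = q * (1 + 2 / (K - 1)) by rewrite /t; field; nra.
have e2 : (1 + 2 / (K - 1)) ^ N <= exp K.
  apply: Rle_trans (pow_exp_le N _) _; first by apply: Rlt_le; apply: Rdiv_lt_0_compat; lra.
  rewrite HNR; apply: Req_le; congr exp; field; lra.
have e3 : (p * t + q) ^ N <= q ^ N * exp K.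
  rewrite e1 Rpow_mult_distr; apply: Rmult_le_compat_l => //; apply: pow_le; lra.
have e4 : / t ^ k <= K ^ k * (p / (2 * q)) ^ k.
  rewrite -pow_inv -Rpow_mult_distr; apply: pow_incr; split.
    by apply: Rlt_le; apply: Rinv_0_lt_compat; lra.
  have -> : / t = (K - 1) * p / (2 * q) by rewrite /t; field; split; nra.
  have -> : K * (p / (2 * q)) = K * p / (2 * q) by field; lra.
  apply: Rmult_le_compat_r; first by apply: Rlt_le; apply: Rinv_0_lt_compat; lra.
  nra.
set Fk := INR k`!.
have hF : 0 < Fk by apply: lt_0_INR; apply/ltP; exact: fact_gt0.
have hC := binom_le n k. rewrite -/Fk -/K in hC.
have hkk := kk_fact k. rewrite -/Fk -/K in hkk.
have hCp : 0 <= INR 'C(n, k) := pos_INR _.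
have hqN : 0 < q ^ N by apply: pow_lt; lra.
have hpq : 0 < p / (2 * q) by apply: Rdiv_lt_0_compat; lra.
have hpqk : 0 < (p / (2 * q)) ^ k by apply: pow_lt.
have hexp := exp_pos K.
set B := INR n ^ k * (q ^ N * exp K * exp K * (p / (2 * q)) ^ k).
have VB : INR 'C(n, k) * ((p * t + q) ^ N / t ^ k) <= B.
  have s1 : (p * t + q) ^ N / t ^ k <= (q ^ N * exp K) * (K ^ k * (p / (2 * q)) ^ k).
    rewrite /Rdiv; apply: Rmult_le_compat => //.
      by apply: pow_le; have := Rmult_lt_0_compat _ _ hp (proj1 ht); lra.
    by apply: Rlt_le; apply: Rinv_0_lt_compat; apply: pow_lt; lra.
  have s2 : (q ^ N * exp K) * (K ^ k * (p / (2 * q)) ^ k) <= (q ^ N * exp K) * ((exp K * Fk) * (p / (2 * q)) ^ k).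
    apply: Rmult_le_compat_l; first by nra.
    apply: Rmult_le_compat_r; lra.
  have s3 : INR 'C(n, k) * ((q ^ N * exp K) * ((exp K * Fk) * (p / (2 * q)) ^ k))
          = (INR 'C(n, k) * Fk) * (q ^ N * exp K * exp K * (p / (2 * q)) ^ k) by ring.
  apply: Rle_trans (Rmult_le_compat_l _ _ _ hCp (Rle_trans _ _ _ s1 s2)) _.
  rewrite s3 /B; apply: Rmult_le_compat_r => //.
  have : 0 < q ^ N * exp K * exp K by apply: Rmult_lt_0_compat => //; apply: Rmult_lt_0_compat.
  nra.
apply: Rle_trans VB _.
have hB : 0 < B.
  rewrite /B; apply: Rmult_lt_0_compat; first by apply: pow_lt.
  repeat apply: Rmult_lt_0_compat => //.
have lnB : ln B = K * ln (INR n) + INR N * ln q + K + K + K * (ln p - ln 2 - ln q).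
  rewrite /B ln_mult; [|by apply: pow_lt|by repeat apply: Rmult_lt_0_compat].
  rewrite ln_pow // ln_mult; [|by repeat apply: Rmult_lt_0_compat|by []].
  rewrite ln_mult; [|by repeat apply: Rmult_lt_0_compat|by []].
  rewrite ln_mult //. rewrite !ln_exp. rewrite ln_pow //. rewrite ln_pow; last lra.
  rewrite /Rdiv ln_mult; [|lra|apply: Rinv_0_lt_compat; lra].
  rewrite ln_Rinv; last lra. rewrite ln_mult; [|lra|lra]. rewrite -/K. ring. lra.
have hLs : L = ln (INR n) + ln p by rewrite /L ln_mult.
have hlq : ln (1 / q) = - ln q by rewrite /Rdiv Rmult_1_l ln_Rinv; lra.
have hln2 : 0 < ln 2 by rewrite -ln_1; apply: ln_increasing; lra.
have hqL1 : 0 <= ln q + ln L.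
  rewrite -ln_mult; [|lra|lra]. rewrite -ln_1; apply: ln_le_mono; lra.
set Z := L - ln 2 + (K - 3) / 2 * ln q + 2.
have hlnB : ln B = K * Z by rewrite lnB /Z HNR hLs; field.
have hKq : K * ln q < - (2 + eps) * L by rewrite hlq in hK; lra.
have hZ : Z < - ln 2.
  have : (K - 3) / 2 * ln q = K * ln q / 2 - 3 / 2 * ln q by field.
  rewrite /Z => ->. lra.
have hKZ : K * Z <= - ln 2 by nra.
rewrite -(exp_ln B hB) -(exp_ln (/ 2)); last lra.
have hh : ln B <= ln (/ 2) by rewrite hlnB ln_Rinv; lra.
case: (Rle_lt_or_eq_dec _ _ hh) => h; [apply: Rlt_le; exact: exp_increasing | rewrite h; lra].
Qed.

Lemma L0_spec eps : 0 < eps -> forall L,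
  Rmax 4 ((2 / eps) * (1 + 3 * Rabs (ln (6 / eps)))) <= L -> 4 + 3 * ln L <= eps * L.
Proof.
move=> he L hL.
have h4 := Rle_trans _ _ _ (Rmax_l _ _) hL.
have h5 := Rle_trans _ _ _ (Rmax_r _ _) hL.
have hc : 0 < 6 / eps by apply: Rdiv_lt_0_compat; lra.
have h1 : ln (L / (6 / eps)) <= L / (6 / eps) - 1 by apply: ln_le_sub1; apply: Rdiv_lt_0_compat; lra.
rewrite /Rdiv ln_mult in h1; [|lra|by apply: Rinv_0_lt_compat].
rewrite ln_Rinv // in h1.
have h2 : L * / (6 / eps) = eps * L / 6 by field; lra.
rewrite h2 in h1.
have h3 : 1 + 3 * ln (6 / eps) <= eps * L / 2.
  have := Rle_abs (ln (6 / eps)).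
  have : (2 / eps) * (1 + 3 * Rabs (ln (6 / eps))) * eps = 2 * (1 + 3 * Rabs (ln (6 / eps))) by field; lra.
  have : (2 / eps) * (1 + 3 * Rabs (ln (6 / eps))) * eps <= L * eps by apply: Rmult_le_compat_r; lra.
  lra.
lra.
Qed.

Lemma u_gen_le d n p conn (X : R) : 0 <= X ->
  (forall k, (k <= n)%N -> / 2 < prob n p (event d n k conn) -> INR k <= X) ->
  INR (u_gen d n p conn) <= X.
Proof.
move=> hX H; rewrite /u_gen.
apply: (big_ind (fun m : nat => INR m <= X)) => //.
  by move=> a b ha hb; rewrite /maxn; case: ifP.
move=> k; rewrite /good; case: (Rlt_dec _ _) => // h _.
apply: H => //; exact: (ltnSE (ltn_ord k)).
Qed.

Lemma eventually_ok (p : nat -> R)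
  (Hp : forall n, Rle 0 (p n) /\ Rle (p n) 1)
  (Hpn : cv_infty (fun n => Rmult (p n) (INR n)))
  (Hqln : cv_infty (fun n => Rmult (Rminus 1 (p n)) (ln (INR n)))) (eps : R) :
  0 < eps -> exists n0 : nat, forall n : nat, (n0 <= n)%N -> forall conn,
    INR (u_gen 2 n (p n) conn) <=
    (2 + eps) * (ln (INR n * p n) / ln (1 / (1 - p n))).
Proof.
move=> he.
set L0 := Rmax 4 ((2 / eps) * (1 + 3 * Rabs (ln (6 / eps)))).
have [n1 Hn1] := Hpn (exp L0).
have [n2 Hn2] := Hqln 3.
exists (maxn n1 n2) => n hn conn.
have hn1 : (n1 <= n)%coq_nat by apply/leP; apply: leq_trans hn; apply: leq_maxl.
have hn2 : (n2 <= n)%coq_nat by apply/leP; apply: leq_trans hn; apply: leq_maxr.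
have A1 := Hn1 n hn1. have A2 := Hn2 n hn2. simpl in A1, A2.
have [hp0 hp1] := Hp n.
set P := p n in A1 A2 hp0 hp1 *.
have hINR := pos_INR n.
have hnp : 0 < INR n * P by have := exp_pos L0; nra.
have hp : 0 < P by nra.
have hL0 : L0 < ln (INR n * P) by rewrite -(ln_exp L0); apply: ln_increasing; [exact: exp_pos | nra].
have h4 : 4 <= L0 by apply: Rmax_l.
have hq : 0 < 1 - P.
  case: (Rle_lt_or_eq_dec _ _ hp1) => h; first lra.
  by rewrite h Rminus_diag Rmult_0_l in A2; lra.
have hlnn : 3 < ln (INR n) by nra.
have hn0 : 0 < INR n by nra.
have hln2 : 0 < ln 2 by rewrite -ln_1; apply: ln_increasing; lra.
have hln2' : ln 2 < 1.
  rewrite -(ln_exp 1); apply: ln_increasing; first lra.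
  have := exp_ineq1 1 ltac:(lra); lra.
have hqL : 2 <= (1 - P) * ln (INR n * P).
  case: (Rlt_le_dec P (/ 2)) => h.
    nra.
  rewrite ln_mult //.
  have : - ln 2 <= ln P.
    rewrite -ln_Rinv; last lra. apply: ln_le_mono; lra.
  nra.
apply: u_gen_le.
  apply: Rmult_le_pos; first lra.
  apply: Rmult_le_pos; first lra.
  apply: Rlt_le; apply: Rinv_0_lt_compat; rewrite -ln_1; apply: ln_increasing; first lra.
  apply: (Rmult_lt_reg_r (1 - P)) => //.
  have -> : 1 / (1 - P) * (1 - P) = 1 by field; lra. lra.
move=> k _ hk; apply: Rnot_lt_le => hlt.
have := key_bound conn he hp ltac:(lra) hnp ltac:(lra) hqL (L0_spec he (Rlt_le _ _ hL0)) hlt.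
lra.
Qed.

Theorem theorem16 (p : nat -> R)
  (Hp : forall n, Rle 0 (p n) /\ Rle (p n) 1)
  (Hpn : cv_infty (fun n => Rmult (p n) (INR n)))
  (Hqln : cv_infty (fun n => Rmult (Rminus 1 (p n)) (ln (INR n)))) :
  forall eps : R, Rlt 0 eps ->
  exists n0 : nat, forall n : nat, (n0 <= n)%N ->
    Rle (INR (u 2 n (p n)))
        (Rmult (Rplus 2 eps) (Rdiv (ln (Rmult (INR n) (p n))) (ln (Rdiv 1 (Rminus 1 (p n)))))) /\
    Rle (INR (u' 2 n (p n)))
        (Rmult (Rplus 2 eps) (Rdiv (ln (Rmult (INR n) (p n))) (ln (Rdiv 1 (Rminus 1 (p n)))))).
Proof.
move=> eps he.
have [n0 H] := eventually_ok Hp Hpn Hqln he.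
exists n0 => n hn; split; [exact: (H n hn false) | exact: (H n hn true)].
Qed.
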